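(* Let $(u_k)_{k\in\mathbb{N}}$ be the positive roots of the equation $u=\tan(u)$. Then for every $s\in(0,1)$ there exists $k_0\in\mathbb{N}$ such that $u_{k_0}$ is not a root of the equation $u/s=\tan(u/s)$. *)

(* Defs.v *)
From Stdlib Require Import Reals.
Open Scope R_scope.

(* x is a (real) root of the equation  x = tan x  (tan must be defined at x,
   i.e. cos x <> 0; Stdlib's tan is sin/cos and total). *)
Definition tan_root (x : R) : Prop := cos x <> 0 /\ x = tan x.

Definition enumerates_pos_tan_roots (u : nat -> R) : Prop :=
  (forall k m, (k < m)%nat -> u k < u m) /\
  (forall x, (0 < x /\ tan_root x) <-> exists k, u k = x).

(* Main.v *)
Require Import Defs.
From Stdlib Require Import Reals.
From Stdlib Require Import Lra Lia Classical ZArith.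
Open Scope R_scope.

Lemma L_shift (n : nat) (z : R) :
  (cos (z + INR n * PI) = cos z /\ sin (z + INR n * PI) = sin z) \/
  (cos (z + INR n * PI) = - cos z /\ sin (z + INR n * PI) = - sin z).
Proof.
  induction n as [|n IH].
  - left; simpl; replace (z + 0 * PI) with z by ring; auto.
  - rewrite S_INR. replace (z + (INR n + 1) * PI) with ((z + INR n * PI) + PI) by ring.
    rewrite neg_cos, neg_sin.
    destruct IH as [[-> ->]|[-> ->]]; [right|left]; split; ring.
Qed.

Lemma L_char (x : R) : 0 < x -> tan_root x -> exists n : nat, x - atan x = INR n * PI.
Proof.
  intros Hx [Hc Ht].
  pose proof PI_RGT_0 as Hpi.
  set (r := (x - PI/2)/PI).
  assert (Hr : r * PI = x - PI/2) by (unfold r; field; lra).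
  destruct (archimed r) as [H1 H2].
  set (k := up r) in *.
  assert (Hrr : r > -1/2).
  { apply Rmult_lt_reg_r with PI; [lra|]. rewrite Hr. lra. }
  assert (Hk0 : (0 <= k)%Z).
  { assert (Hl : (-1 < k)%Z) by (apply lt_IZR; simpl; lra). lia. }
  set (n := Z.to_nat k).
  assert (Hn : INR n = IZR k) by (unfold n; rewrite INR_IZR_INZ, Z2Nat.id by lia; reflexivity).
  exists n. rewrite Hn.
  set (y := x - IZR k * PI).
  assert (Hb1 : IZR k * PI > r * PI) by (apply Rmult_lt_compat_r; lra).
  assert (Hb2 : IZR k * PI <= r * PI + PI).
  { assert (IZR k <= r + 1) by lra.
    replace (r * PI + PI) with ((r + 1) * PI) by ring.
    apply Rmult_le_compat_r; lra. }
  assert (Hxy : y + INR n * PI = x) by (unfold y; rewrite Hn; ring).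
  destruct (L_shift n y) as [[Hc1 Hs1]|[Hc1 Hs1]]; rewrite Hxy in Hc1, Hs1.
  all: assert (Hcy : cos y <> 0) by (intro E; apply Hc; rewrite Hc1, E; ring).
  all: assert (Htxy : tan x = tan y) by (unfold tan; rewrite Hc1, Hs1; field; auto).
  all: assert (Hyne : y <> - (PI/2)) by (intro E; apply Hcy; rewrite E, cos_neg; apply cos_PI2).
  all: assert (Hyd : y = x - IZR k * PI) by reflexivity.
  all: assert (Hyb : - (PI/2) < y < PI/2) by (split; [|lra]; destruct (Rle_lt_or_eq_dec (-(PI/2)) y); [lra|lra|congruence]).
  all: assert (Ha : atan (tan x) = y) by (rewrite Htxy; apply atan_tan; exact Hyb).
  all: rewrite <- Ht in Ha; lra.
Qed.

Lemma L_of (n : nat) : (1 <= n)%nat ->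
  exists y, INR n * PI < y /\ tan_root y /\ y - atan y = INR n * PI.
Proof.
  intros Hn1.
  pose proof PI_RGT_0 as Hpi.
  assert (Hn : 1 <= INR n) by (replace 1 with (INR 1) by reflexivity; apply le_INR; exact Hn1).
  assert (HnP : 0 < INR n * PI) by nra.
  set (f := fun y => y - atan y - INR n * PI).
  assert (Hca : continuity atan).
  { intro t. apply derivable_continuous_pt, derivable_pt_atan. }
  assert (Hcf : continuity f).
  { unfold f. apply continuity_minus; [apply continuity_minus|].
    - apply derivable_continuous, derivable_id.
    - exact Hca.
    - apply continuity_const. intros a b; reflexivity. }
  destruct (IVT f 0 (INR n * PI + PI/2) Hcf) as [z [Hz Hfz]].
  - lra.
  - unfold f. rewrite atan_0. lra.
  - unfold f. pose proof (atan_bound (INR n * PI + PI / 2)). lra.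
  - unfold f in Hfz.
    assert (Hz0 : 0 < z).
    { destruct (Rle_lt_or_eq_dec 0 z) as [h|h]; [lra|exact h|].
      subst z. rewrite atan_0 in Hfz. lra. }
    assert (Haz : 0 < atan z) by (rewrite <- atan_0; apply atan_increasing; exact Hz0).
    exists z. split; [lra|]. split; [|lra].
    pose proof (atan_bound z) as Hab.
    assert (Hcz : 0 < cos (atan z)) by (apply cos_gt_0; lra).
    assert (Hzz : atan z + INR n * PI = z) by lra.
    destruct (L_shift n (atan z)) as [[Hc1 Hs1]|[Hc1 Hs1]]; rewrite Hzz in Hc1, Hs1.
    all: split; [rewrite Hc1; lra|].
    all: rewrite <- (tan_atan z) at 1; unfold tan; rewrite Hc1, Hs1; field; lra.
Qed.

Lemma L_key (a x c : R) (n m : nat) : 1 < a -> 0 < x -> 0 < c < PI/2 -> / tan c < x ->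
  x - atan x = INR n * PI -> a * x - atan (a * x) = INR m * PI ->
  0 < (a * (2 * INR n + 1) - (2 * INR m + 1)) * PI < 2 * a * c.
Proof.
  intros Ha Hx Hc Hxc Hn Hm.
  pose proof PI_RGT_0 as Hpi.
  assert (Hax : 0 < a * x) by nra.
  pose proof (atan_inv x Hx) as I1.
  pose proof (atan_inv (a * x) Hax) as I2.
  assert (He : (a * (2 * INR n + 1) - (2 * INR m + 1)) * PI
               = 2 * (a * atan (/ x) - atan (/ (a * x)))).
  { rewrite I1, I2.
    replace ((a * (2 * INR n + 1) - (2 * INR m + 1)) * PI)
      with (2 * a * (INR n * PI) + a * PI - 2 * (INR m * PI) - PI) by ring.
    rewrite <- Hn, <- Hm. field. }
  rewrite He.
  assert (H1 : atan (/ (a * x)) < atan (/ x)).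
  { apply atan_increasing. apply Rinv_lt_contravar; nra. }
  assert (H2 : 0 < atan (/ x)).
  { rewrite <- atan_0. apply atan_increasing. apply Rinv_0_lt_compat; lra. }
  assert (H0 : 0 < atan (/ (a * x))).
  { rewrite <- atan_0. apply atan_increasing. apply Rinv_0_lt_compat; lra. }
  assert (Htc : 0 < tan c) by (apply tan_gt_0; lra).
  assert (H3 : atan (/ x) < c).
  { rewrite <- (atan_tan c) by lra. apply atan_increasing.
    rewrite <- (Rinv_inv (tan c)). apply Rinv_lt_contravar; [|exact Hxc].
    apply Rmult_lt_0_compat; [apply Rinv_0_lt_compat|]; lra. }
  split; nra.
Qed.

Theorem lemmaA1 (u : nat -> R) (hu : enumerates_pos_tan_roots u) :
  forall s : R, 0 < s < 1 -> exists k0 : nat, ~ tan_root (u k0 / s).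
Proof.
  intros s Hs.
  destruct (classic (exists k0, ~ tan_root (u k0 / s))) as [h|h]; [exact h|exfalso].
  assert (Hall : forall k, tan_root (u k / s)) by (intro k; apply NNPP; intro; apply h; eauto).
  destruct hu as [_ Hu].
  pose proof PI_RGT_0 as Hpi.
  set (a := / s).
  assert (Ha : 1 < a).
  { unfold a. rewrite <- Rinv_1. apply Rinv_lt_contravar; lra. }
  assert (HA : forall x, 0 < x -> tan_root x -> tan_root (a * x)).
  { intros x Hx Hr. destruct (proj1 (Hu x) (conj Hx Hr)) as [k Hk].
    replace (a * x) with (u k / s) by (rewrite Hk; unfold a, Rdiv; ring). apply Hall. }
  set (c := PI / (3 * a)).
  assert (Hc3 : c * (3 * a) = PI) by (unfold c; field; lra).
  assert (Hc : 0 < c < PI / 2) by (split; nra).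
  assert (Hac : 2 * a * c = 2 * PI / 3) by lra.
  set (X := / tan c).
  destruct (archimed (X / PI)) as [HX1 _].
  set (N0 := S (Z.to_nat (up (X / PI)))).
  assert (HN0 : X < INR N0 * PI).
  { assert (Hz : (up (X / PI) <= Z.of_nat (Z.to_nat (up (X / PI))))%Z) by lia.
    apply IZR_le in Hz. rewrite <- INR_IZR_INZ in Hz.
    unfold N0. rewrite S_INR.
    assert (X / PI < INR (Z.to_nat (up (X / PI))) + 1) by lra.
    apply Rmult_lt_compat_r with (r := PI) in H; [|lra].
    unfold Rdiv in H. rewrite Rmult_assoc, Rinv_l in H by lra. lra. }
  assert (Hge : forall n, (N0 <= n)%nat -> INR N0 * PI <= INR n * PI).
  { intros n Hn. apply Rmult_le_compat_r; [lra|]. apply le_INR; exact Hn. }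
  destruct (L_of N0) as [y0 [Hy0 [Hr0 Hi0]]]; [unfold N0; lia|].
  assert (Hy0p : 0 < y0) by (pose proof (pos_INR N0); nra).
  destruct (L_char (a * y0)) as [m0 Hm0]; [nra| apply HA; auto |].
  set (e0 := a * (2 * INR N0 + 1) - (2 * INR m0 + 1)).
  assert (He0 : 0 < e0).
  { assert (HX0 : X < y0) by lra.
    destruct (L_key a y0 c N0 m0 Ha Hy0p Hc HX0 Hi0 Hm0) as [K1 K2]. fold e0 in K1. nra. }
  assert (Claim : forall k : nat, exists n m y, (N0 <= n)%nat /\ INR n * PI < y /\
     y - atan y = INR n * PI /\ a * y - atan (a * y) = INR m * PI /\
     (INR k + 1) * e0 <= a * (2 * INR n + 1) - (2 * INR m + 1)).
  { induction k as [|k IH].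
    - exists N0, m0, y0. repeat split; auto. change (INR 0) with 0. unfold e0. lra.
    - destruct IH as [n [m [y [Hn [Hy [Hiy [Hmy Hey]]]]]]].
      pose proof (Hge n Hn) as Hgen.
      destruct (L_of (3 * n + 1)) as [z [Hz [Hrz Hiz]]]; [lia|].
      assert (Hn3 : INR (3 * n + 1) = 3 * INR n + 1) by (rewrite plus_INR, mult_INR; simpl; ring).
      assert (Hpn : 0 <= INR n) by apply pos_INR.
      assert (Hzp : 0 < z) by (rewrite Hn3 in Hz; nra).
      assert (Hyp : 0 < y) by nra.
      destruct (L_char (a * z)) as [m' Hm']; [nra| apply HA; auto |].
      exists (3 * n + 1)%nat, m', z.
      assert (HXy : X < y) by lra.
      assert (HXz : X < z) by (rewrite Hn3 in Hz; nra).
      destruct (L_key a y c n m Ha Hyp Hc HXy Hiy Hmy) as [K1 K2].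
      destruct (L_key a z c (3 * n + 1) m' Ha Hzp Hc HXz Hiz Hm') as [K3 K4].
      rewrite Hn3 in K3, K4.
      set (e := a * (2 * INR n + 1) - (2 * INR m + 1)) in *.
      set (e' := a * (2 * (3 * INR n + 1) + 1) - (2 * INR m' + 1)) in *.
      assert (Hel : e < 2 / 3) by nra.
      assert (He'l : e' < 2 / 3) by nra.
      assert (He0' : 0 < e) by nra.
      assert (He1' : 0 < e') by nra.
      assert (Hd : e' - 3 * e = 6 * INR m + 2 - 2 * INR m') by (unfold e, e'; ring).
      assert (HZ : (3 * Z.of_nat m + 1 - Z.of_nat m' = 0)%Z).
      { apply one_IZR_lt1.
        rewrite minus_IZR, plus_IZR, mult_IZR, <- !INR_IZR_INZ. simpl. lra. }
      assert (Hmm : m' = (3 * m + 1)%nat) by lia.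
      assert (Hee : e' = 3 * e).
      { rewrite Hmm in Hd. rewrite plus_INR, mult_INR in Hd. simpl in Hd. lra. }
      assert (Hfin : a * (2 * (3 * INR n + 1) + 1) - (2 * INR m' + 1) = 3 * e)
        by (rewrite <- Hee; reflexivity).
      split; [lia|]. split; [exact Hz|]. split; [exact Hiz|]. split; [exact Hm'|].
      rewrite Hn3, Hfin, S_INR. pose proof (pos_INR k). nra. }
  destruct (archimed_cor1 (e0 * 3 / 2)) as [N [HN HNp]]; [lra|].
  destruct (Claim N) as [n [m [y [Hn [Hy [Hiy [Hmy Hey]]]]]]].
  pose proof (Hge n Hn) as Hgen.
  assert (Hyp : 0 < y) by (pose proof (pos_INR N0); nra).
  assert (HXy : X < y) by lra.
  destruct (L_key a y c n m Ha Hyp Hc HXy Hiy Hmy) as [K1 K2].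
  assert (HNr : 0 < INR N) by (apply lt_0_INR; exact HNp).
  assert (HN1 : 1 < INR N * (e0 * 3 / 2)).
  { apply Rmult_lt_compat_l with (r := INR N) in HN; [|exact HNr].
    rewrite Rinv_r in HN by lra. exact HN. }
  set (e := a * (2 * INR n + 1) - (2 * INR m + 1)) in *.
  assert (e < 2 / 3) by nra.
  nra.
Qed.
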